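(* Let $C$ be an $n\times n$ matrix of non-negative integers, and let $m\neq n$. Suppose: - all entries in the first $m$ rows of $C$ are non-zero; - all entries in the last $n-m$ rows of $C$ are zero; - at least one entry of $C$ equals $1$. Then there is an $(n+2)\times(n+2)$ integer matrix $D=(d_{il})$ such that: (i) the last $(n+2)-(m+2)$ rows of $D$ are identically zero; (ii) every entry in the first $m+2$ rows of $D$ is strictly positive; (iii) $d_{i1}=1$ for all $1\le i\le m+2$; (iv) the top-left $(m+2)\times(m+2)$ corner of $D$ has determinant zero; (v) $J_{nm}+C\sim_M J_{(n+2)(m+2)}+D$.
   Context: $J_{nm}$ ($0\le m\le n$) is the $n\times n$ matrix whose $i$-th row, for $i\le m$, has a $1$ in position $i$ and $0$ elsewhere, and whose last $n-m$ rows consist entirely of $\infty$. Arithmetic convention: $\infty+a=\infty$. For an $X\times X$ matrix $A$ with entries in $\{0,1,2,\dots\}\cup\{\infty\}$, $G_A$ is the graph with vertex set $X$ and exactly $A(x,y)$ edges from $x$ to $y$. For matrices, $A\sim_M B$ means $G_A\sim_M G_B$. A graph may have multiple edges and loops. A source receives no edges, a sink emits no edges, and an infinite emitter emits infinitely many edges. A vertex is singular if it is a sink or infinite emitter, and regular otherwise. Move-equivalence $\sim_M$ is the smallest equivalence relation on graphs with finitely many vertices such that $G\sim_M E$ whenever $E$ is isomorphic to a graph obtained from $G$ by one of the following moves. (S) Delete a regular source together with the edges it emits. (R) For a regular vertex $u$ emitting exactly one edge $f$, with $r(f)\neq u$, and all of whose incoming edges have the same source $v$: delete $u$, $f$ and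 the edges into $u$, and add for each $e\in r^{-1}(u)$ an edge $[ef]$ from $v$ to $r(f)$. (O) Out-splitting at a non-sink $v$ along a partition $\mathcal E_1,\dots,\mathcal E_n$ of $s^{-1}(v)$ with at most one infinite part. Replace $v$ by $v^1,\dots,v^n$. Each edge $e$ into $v$ becomes copies $e^1,\dots,e^n$ with $r(e^i)=v^i$ and source $s(e)$, or source $v^j$ if $s(e)=v$ and $e\in\mathcal E_j$. An edge from $v$ to $w\neq v$ lying in $\mathcal E_i$ gets source $v^i$. (I) In-splitting at a regular non-source $v$ along a partition $\mathcal E_1,\dots,\mathcal E_n$ of $r^{-1}(v)$. Replace $v$ by $v^1,\dots,v^n$. Each edge $e$ out of $v$ becomes copies $e^1,\dots,e^n$ with $s(e^i)=v^i$ and range $r(e)$, or range $v^j$ if $r(e)=v$ and $e\in\mathcal E_j$. An edge into $v$ from $w\neq v$ lying in $\mathcal E_i$ gets range $v^i$. *)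

(* Defs.v *)
From HB Require Import structures.
From Stdlib Require List.
From mathcomp Require Import all_boot all_algebra.


Unset Printing Implicit Defensive.

Record graph := Graph { gV : finType; gE : Type; gs : gE -> gV; gr : gE -> gV }.
Arguments gs {g} _.
Arguments gr {g} _.

Definition is_source (G : graph) (v : gV G) := forall e : gE G, gr e <> v.
Definition is_sink (G : graph) (v : gV G) := forall e : gE G, gs e <> v.
Definition finite_edges (G : graph) (P : gE G -> Prop) :=
  exists l : seq (gE G), forall e, P e -> List.In e l.
Definition inf_emitter (G : graph) (v : gV G) := ~ finite_edges G (fun e : gE G => gs e = v).
Definition singular (G : graph) (v : gV G) := is_sink G v \/ inf_emitter G v.
Definition regular (G : graph) (v : gV G) := ~ singular G v.

Definition graph_iso (G H : graph) :=
  exists (fV : gV G -> gV H) (hV : gV H -> gV G) (fE : gE G -> gE H) (hE : gE H -> gE G),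
    cancel fV hV /\ cancel hV fV /\ cancel fE hE /\ cancel hE fE /\
    (forall e, gs (fE e) = fV (gs e)) /\ (forall e, gr (fE e) = fV (gr e)).

Section Del.
Variables (G : graph) (u : gV G).
Definition del_E := {e : gE G | (gs e != u) && (gr e != u)}.
Lemma del_s (e : del_E) : gs (proj1_sig e) != u.
Proof. by case: e => e /= /andP []. Qed.
Lemma del_r (e : del_E) : gr (proj1_sig e) != u.
Proof. by case: e => e /= /andP []. Qed.
Definition del_graph : graph :=
  @Graph {x : gV G | x != u} del_E
    (fun e => exist _ (gs (proj1_sig e)) (del_s e))
    (fun e => exist _ (gr (proj1_sig e)) (del_r e)).
End Del.

(* ---------- (R): reduction at u, with unique out-edge f, incoming edges
   all from v; edges e into u are replaced by [ef] from v to r(f). ---------- *)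
Section Red.
Variables (G : graph) (u v : gV G) (f : gE G) (hv : v != u) (hf : gr f != u).
Definition red_E := (del_E G u + {e : gE G | gr e == u})%type.
Definition red_graph : graph :=
  @Graph {x : gV G | x != u} red_E
    (fun e => match e with
              | inl e => exist _ (gs (proj1_sig e)) (del_s G u e)
              | inr _ => exist _ v hv end)
    (fun e => match e with
              | inl e => exist _ (gr (proj1_sig e)) (del_r G u e)
              | inr _ => exist _ (gr f) hf end).
End Red.

Section Split.
Variables (G : graph) (v : gV G) (k : nat) (p : gE G -> 'I_k).
Definition split_V := ({x : gV G | x != v} + 'I_k)%type.
Definition sproj (x : gV G) (d : 'I_k) : split_V :=
  match @insub _ (fun y => y != v) {y : gV G | y != v} x with
  | Some y => inl y
  | None => inr d end.

Definition osplit_E := ({e : gE G | gr e != v} + ({e : gE G | gr e == v} * 'I_k))%type.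
Definition osplit_graph : graph :=
  @Graph split_V osplit_E
    (fun e => match e with
              | inl e => sproj (gs (proj1_sig e)) (p (proj1_sig e))
              | inr (e, _) => sproj (gs (proj1_sig e)) (p (proj1_sig e)) end)
    (fun e => match e with
              | inl e => sproj (gr (proj1_sig e)) (p (proj1_sig e))
              | inr (_, i) => inr i end).

Definition isplit_E := ({e : gE G | gs e != v} + ({e : gE G | gs e == v} * 'I_k))%type.
Definition isplit_graph : graph :=
  @Graph split_V isplit_E
    (fun e => match e with
              | inl e => sproj (gs (proj1_sig e)) (p (proj1_sig e))
              | inr (_, i) => inr i end)
    (fun e => match e with
              | inl e => sproj (gr (proj1_sig e)) (p (proj1_sig e))
              | inr (e, _) => sproj (gr (proj1_sig e)) (p (proj1_sig e)) end).
End Split.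

Inductive move_step : graph -> graph -> Prop :=
| MoveS (G H : graph) (v : gV G) :
    regular G v -> is_source G v -> graph_iso (del_graph G v) H -> move_step G H
| MoveR (G H : graph) (u v : gV G) (f : gE G) (hv : v != u) (hf : gr f != u) :
    regular G u -> gs f = u -> (forall e, gs e = u -> e = f) ->
    (forall e, gr e = u -> gs e = v) ->
    graph_iso (red_graph G u v f hv hf) H -> move_step G H
| MoveO (G H : graph) (v : gV G) (k : nat) (p : gE G -> 'I_k) :
    ~ is_sink G v ->
    (forall i, exists e, gs e = v /\ p e = i) ->
    (* at most one infinite part *)
    (forall i j, i != j -> finite_edges G (fun e => gs e = v /\ p e = i)
                        \/ finite_edges G (fun e => gs e = v /\ p e = j)) ->
    graph_iso (osplit_graph G v k p) H -> move_step G H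
| MoveI (G H : graph) (v : gV G) (k : nat) (p : gE G -> 'I_k) :
    regular G v -> ~ is_source G v ->
    (forall i, exists e, gr e = v /\ p e = i) ->
    graph_iso (isplit_graph G v k p) H -> move_step G H.

Inductive move_eq : graph -> graph -> Prop :=
| me_step G H : move_step G H -> move_eq G H
| me_refl G : move_eq G G
| me_sym G H : move_eq G H -> move_eq H G
| me_trans G H K : move_eq G H -> move_eq H K -> move_eq G K.

Inductive xnat := XFin of nat | XInf.
Definition xadd (a b : xnat) : xnat :=
  match a, b with XFin x, XFin y => XFin (x + y) | _, _ => XInf end.
Definition xlt (k : nat) (a : xnat) : bool :=
  match a with XFin x => k < x | XInf => true end.

(* G_A: vertex set 'I_n, exactly A x y edges from x to y
   (edges from x to y are the (x,y,k) with k < A x y) *)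
Definition mgraph (n : nat) (A : 'I_n -> 'I_n -> xnat) : graph :=
  @Graph 'I_n {t : 'I_n * 'I_n * nat | xlt t.2 (A t.1.1 t.1.2)}
    (fun t => (proj1_sig t).1.1) (fun t => (proj1_sig t).1.2).

Definition move_eq_mx (n n' : nat) (A : 'I_n -> 'I_n -> xnat) (B : 'I_n' -> 'I_n' -> xnat) :=
  move_eq (mgraph n A) (mgraph n' B).

Definition Jmx (n m : nat) : 'I_n -> 'I_n -> xnat :=
  fun i j => if (i < m)%N then XFin (i == j) else XInf.

Definition Jplus (n m : nat) (C : 'I_n -> 'I_n -> nat) : 'I_n -> 'I_n -> xnat :=
  fun i j => xadd (Jmx n m i j) (XFin (C i j)).

(* Main.v *)
Require Import Defs.
From HB Require Import structures.
From mathcomp Require Import all_boot all_algebra.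
From mathcomp Require Import zify.
From Stdlib Require Import ClassicalEpsilon FunctionalExtensionality.


Definition fin (a : xnat) : nat := if a is XFin k then k else 0.
Definition xsub (T a : xnat) : xnat :=
  match T, a with XFin t, XFin k => XFin (t - k) | XFin t, XInf => XFin 0 | XInf, _ => XInf end.
Definition valid (a T : xnat) : bool :=
  match a, T with XFin k, XFin t => k <= t | XInf, XFin _ => false | _, XInf => true end.
Definition inP0 (a : xnat) (j : nat) : bool := if a is XFin k then j < k else ~~ odd j.
Definition num (a : xnat) (j : nat) : nat :=
  if a is XFin k then (if j < k then j else j - k) else j./2.

Lemma L1 a T j : valid a T -> xlt j T -> inP0 a j -> xlt (num a j) a.
Proof. by case: a => [k|] //= _ _ h; rewrite h. Qed.

Lemma L2 a T j : valid a T -> xlt j T -> ~~ inP0 a j -> xlt (num a j) (xsub T a).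
Proof.
case: a => [k|]; case: T => [t|] //=; move=> hk hj hkj; rewrite (negbTE hkj) //=; lia.
Qed.

Lemma L3 a j j' : inP0 a j = inP0 a j' -> num a j = num a j' -> j = j'.
Proof.
case: a => [k|] /=.
  case: (ltnP j k) => h1; case: (ltnP j' k) => h2 //= _; lia.
move=> /negb_inj ho hh.
by rewrite -(odd_double_half j) -(odd_double_half j') ho hh.
Qed.

Lemma L4 a T i : valid a T -> xlt i a -> exists j, [/\ xlt j T, inP0 a j & num a j = i].
Proof.
case: a => [k|]; case: T => [t|] //= hv hi.
- by exists i; rewrite /= hi; split => //; lia.
- by exists i; rewrite hi.
- exists i.*2; rewrite odd_double /=; split => //.
  by rewrite -[i.*2]/(false + i.*2) half_bit_double.
Qed.

Lemma L5 a T i : valid a T -> xlt i (xsub T a) -> exists j, [/\ xlt j T, ~~ inP0 a j & num a j = i].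
Proof.
case: a => [k|]; case: T => [t|] //= hv hi.
- exists (i + k); have -> : (i + k < k) = false by lia. split => //; lia.
- exists (i + k); have -> : (i + k < k) = false by lia. split => //; lia.
- exists i.*2.+1; rewrite /= odd_double /=; split => //.
  by rewrite uphalf_double.
Qed.

Definition mgT (V : finType) (A : V -> V -> xnat) : graph :=
  @Graph V {t : V * V * nat | xlt t.2 (A t.1.1 t.1.2)}
    (fun t => (proj1_sig t).1.1) (fun t => (proj1_sig t).1.2).

Record rep (G : graph) (A : gV G -> gV G -> xnat) (c : gE G -> nat) : Prop := Repr {
  r_lt : forall e, xlt (c e) (A (gs e) (gr e));
  r_inj : forall e e', gs e = gs e' -> gr e = gr e' -> c e = c e' -> e = e';
  r_surj : forall x y j, xlt j (A x y) -> exists e, [/\ gs e = x, gr e = y & c e = j] }.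

Lemma repr_mgT V A : rep (mgT V A) A (fun t => (proj1_sig t).2).
Proof.
split.
- by case=> [[[x y] j] h].
- case=> [[[x y] j] h] [[[x' y'] j'] h'] /= ex ey ej; subst.
  by apply: val_inj.
- move=> x y j h; by exists (exist _ (x, y, j) h).
Qed.

Definition tr (G : graph) : graph := @Graph (gV G) (gE G) (@gr G) (@gs G).

Lemma repr_tr G A c : rep G A c -> rep (tr G) (fun x y => A y x) c.
Proof.
case=> h1 h2 h3; split => //=.
- by move=> e e' a b; apply: h2.
- by move=> x y j /h3 [e [? ? ?]]; exists e.
Qed.
Arguments L1 {a T j}. Arguments L2 {a T j}. Arguments L3 {a j j'}.
Arguments L4 {a T i}. Arguments L5 {a T i}.
Arguments r_lt {G A c}. Arguments r_inj {G A c}. Arguments r_surj {G A c}.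
Arguments repr_tr {G A c}.


Definition o1 : 'I_2 := @Ordinal 2 1 erefl.

Definition Bout (V : finType) (A : V -> V -> xnat) (v : V) (a : V -> xnat) (s t : option V) : xnat :=
  let y := odflt v t in
  match s with None => a y | Some x => if x == v then xsub (A v y) (a y) else A x y end.

Arguments Bout {V}.

Section OSplit.
Variables (G : graph) (A : gV G -> gV G -> xnat) (c : gE G -> nat) (v : gV G) (a : gV G -> xnat).

Definition pspl (e : gE G) : 'I_2 := if inP0 (a (gr e)) (c e) then ord0 else o1.
Definition ce (e : gE G) : nat := if gs e == v then num (a (gr e)) (c e) else c e.
Definition cspl (e : gE (osplit_graph G v 2 pspl)) : nat :=
  match e with inl e => ce (proj1_sig e) | inr (e, _) => ce (proj1_sig e) end.
Definition sv (s : split_V G v 2) : option (gV G) :=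
  match s with inl x => Some (proj1_sig x) | inr i => if i == ord0 then None else Some v end.

Lemma sv_sproj x d : sv (sproj G v 2 x d) =
  if x == v then (if d == ord0 then None else Some v) else Some x.
Proof.
rewrite /sproj; case: insubP => [y hy hx | hn] /=; first by rewrite (negbTE hy) -hx.
by move: hn; rewrite negbK => ->.
Qed.

Lemma sv_inj : injective sv.
Proof.
case=> [x|i] [y|j] /=.
- by move=> [] h; congr inl; apply: val_inj.
- case: (j == ord0) => // -[] h; by move: (proj2_sig x); rewrite h eqxx.
- case: (i == ord0) => // -[] h; by move: (proj2_sig y); rewrite -h eqxx.
- have h2 (k : 'I_2) : (k == ord0) = false -> k = o1.
    by case: k => [[|[|k]] hk] //= _; apply: val_inj.
  case: (boolP (i == ord0)) => /eqP hi; case: (boolP (j == ord0)) => /eqP hj //.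
  + by rewrite hi hj.
  + by move=> _; rewrite (h2 i (negbTE (introN eqP hi))) (h2 j (negbTE (introN eqP hj))).
Qed.

Lemma pspl0 e : (pspl e == ord0) = inP0 (a (gr e)) (c e).
Proof. by rewrite /pspl; case: ifP. Qed.

Hypothesis hR : rep G A c.
Hypothesis hval : forall y, valid (a y) (A v y).

Lemma ce_lt e : xlt (ce e)
  (Bout A v a (if gs e == v then (if pspl e == ord0 then None else Some v) else Some (gs e)) (Some (gr e))).
Proof.
have := r_lt hR e; rewrite /ce /Bout /=.
case: eqP => [hs|hs]; last by case: eqP.
rewrite pspl0; case: ifP => hp /=; rewrite hs => hlt.
- exact: L1 (hval (gr e)) hlt hp.
- rewrite eqxx; apply: (L2 (hval _) hlt); by rewrite hp.
Qed.

Definition svs (e : gE G) : option (gV G) :=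
  if gs e == v then (if pspl e == ord0 then None else Some v) else Some (gs e).

Lemma core e e' : svs e = svs e' -> gr e = gr e' -> ce e = ce e' -> e = e'.
Proof.
rewrite /svs /ce; case: (eqVneq (gs e) v) => he; case: (eqVneq (gs e') v) => he' //=.
- rewrite !pspl0 => hs hr; rewrite hr => hc.
  apply: (r_inj hR) => //; first by rewrite he he'.
  by apply: L3 hc; move: hs; rewrite hr; do 2 case: ifP => //.
- by move=> hs; exfalso; move: hs; case: ifP => _ // [h]; move: he'; rewrite -h eqxx.
- by move=> hs; exfalso; move: hs; case: ifP => _ // [h]; move: he; rewrite h eqxx.
- by move=> [] hs hr hc; apply: (r_inj hR).
Qed.

Lemma find_e (s : split_V G v 2) y j : xlt j (Bout A v a (sv s) (Some y)) ->
  exists e, [/\ gr e = y, ce e = j & svs e = sv s].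
Proof.
rewrite /svs /ce; case: s => [x|i] /=.
- rewrite (negbTE (proj2_sig x)) => /(r_surj hR) [e [h1 h2 h3]].
  by exists e; rewrite h1 (negbTE (proj2_sig x)) h2 h3.
- case: ifP => hi.
  + case/(L4 (hval y)) => j0 [h1 h2 h3].
    case/(r_surj hR): h1 => e [e1 e2 e3]; exists e.
    by rewrite e1 eqxx pspl0 e2 e3 h2.
  + rewrite /Bout /= eqxx; case/(L5 (hval y)) => j0 [h1 h2 h3].
    case/(r_surj hR): h1 => e [e1 e2 e3]; exists e.
    by rewrite e1 eqxx pspl0 e2 e3 (negbTE h2).
Qed.

Lemma repr_osplit : rep (osplit_graph G v 2 pspl) (fun s t => Bout A v a (sv s) (sv t)) cspl.
Proof.
split.
- case=> [[e h]|[[e h] i]] /=; rewrite !sv_sproj.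
  + by rewrite (negbTE h); apply: ce_lt.
  + have hv : gr e = v by apply/eqP.
    have := ce_lt e; rewrite hv /Bout /=.
    by case: (i == ord0).
- case=> [[e h]|[[e h] i]] [[e' h']|[[e' h'] i']] /= hs hr hc.
  + have he : e = e'.
      apply: core => //.
      * by move/(congr1 sv): hs; rewrite !sv_sproj.
      * by move/(congr1 sv): hr; rewrite !sv_sproj (negbTE h) (negbTE h') => -[].
    by subst e'; congr inl; apply: val_inj.
  + move/(congr1 sv): hr; rewrite sv_sproj (negbTE h) /=.
    by case: (i' == ord0) => // -[] hh; have hk : gr e != v := h; by rewrite hh eqxx in hk.
  + move/(congr1 sv): hr; rewrite sv_sproj (negbTE h') /=.
    by case: (i == ord0) => // -[] hh; have hk : gr e' != v := h'; by rewrite -hh eqxx in hk.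
  + case: hr => hi; subst i'.
    have he : e = e'.
      apply: core => //.
      * by move/(congr1 sv): hs; rewrite !sv_sproj.
      * by rewrite (eqP h) (eqP h').
    by subst e'; congr (inr (_, _)); apply: val_inj.
- move=> s t j.
  case: t => [y|i] hj.
  + have [e [e1 e2 e3]] := find_e s (proj1_sig y) j hj.
    have hy : gr e != v by rewrite e1 (proj2_sig y).
    exists (inl (exist _ e hy)); split => //=.
    * by apply: sv_inj; rewrite sv_sproj.
    * by apply: sv_inj; rewrite sv_sproj (negbTE hy) e1.
  + have hj' : xlt j (Bout A v a (sv s) (Some v)) by move: hj; rewrite /=; case: (i == ord0).
    have [e [e1 e2 e3]] := find_e s v j hj'.
    have hy : gr e == v by rewrite e1.
    exists (inr (exist _ e hy, i)); split => //=.
    by apply: sv_inj; rewrite sv_sproj.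
Qed.
End OSplit.
Arguments pspl {G} c a e.
Arguments ce {G} c v a e.
Arguments cspl {G} c v a e.
Arguments sv {G} v s.
Arguments sv_sproj {G} v x d.
Arguments sv_inj {G} v [x1 x2].
Arguments repr_osplit {G A c v a}.


Lemma rep_iso (G H : graph) A B c d (f : gV G -> gV H) (g : gV H -> gV G) :
  rep G A c -> rep H B d -> cancel f g -> cancel g f ->
  (forall x y, B (f x) (f y) = A x y) -> graph_iso G H.
Proof.
move=> hG hH fg gf hB.
have fE_ex (e : gE G) : exists e', [/\ gs e' = f (gs e), gr e' = f (gr e) & d e' = c e].
  by apply: (r_surj hH); rewrite hB; exact: (r_lt hG e).
have hE_ex (e : gE H) : exists e', [/\ gs e' = g (gs e), gr e' = g (gr e) & c e' = d e].
  by apply: (r_surj hG); rewrite -hB !gf; exact: (r_lt hH e).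
pose fE e := proj1_sig (constructive_indefinite_description _ (fE_ex e)).
pose hE e := proj1_sig (constructive_indefinite_description _ (hE_ex e)).
have fEP e : [/\ gs (fE e) = f (gs e), gr (fE e) = f (gr e) & d (fE e) = c e].
  exact: proj2_sig (constructive_indefinite_description _ (fE_ex e)).
have hEP e : [/\ gs (hE e) = g (gs e), gr (hE e) = g (gr e) & c (hE e) = d e].
  exact: proj2_sig (constructive_indefinite_description _ (hE_ex e)).
exists f, g, fE, hE; do !split => //.
- move=> e; have [h1 h2 h3] := hEP (fE e); have [k1 k2 k3] := fEP e.
  by apply: (r_inj hG); rewrite ?h1 ?h2 ?h3 ?k1 ?k2 ?k3 ?fg.
- move=> e; have [h1 h2 h3] := fEP (hE e); have [k1 k2 k3] := hEP e.
  by apply: (r_inj hH); rewrite ?h1 ?h2 ?h3 ?k1 ?k2 ?k3 ?gf.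
- by move=> e; have [] := fEP e.
- by move=> e; have [] := fEP e.
Qed.

Lemma In_mem (T : eqType) (x : T) (s : seq T) : x \in s -> List.In x s.
Proof. elim: s => //= y s IH; rewrite in_cons => /orP [/eqP ->|/IH]; by [left|right]. Qed.

Lemma mgT_fin (V : finType) A (x : V) (bnd : V -> nat) (P : gE (mgT V A) -> Prop) :
  (forall e, P e -> gs e = x /\ (proj1_sig e).2 < bnd (gr e)) -> finite_edges (mgT V A) P.
Proof.
move=> hP.
exists (pmap insub [seq (x, y, j) | y <- enum V, j <- iota 0 (bnd y)]) => e /hP [h1 h2].
apply: In_mem; rewrite mem_pmap_sub.
move: h1 h2; case: e => [[[x' y] j] h] /= -> hj.
apply/allpairsPdep; exists y, j; split => //; rewrite ?mem_enum ?mem_iota //=.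
Qed.

Definition vs (G : graph) (v : gV G) (o : option (gV G)) : split_V G v 2 :=
  match o with None => inr ord0 | Some x => sproj G v 2 x o1 end.
Arguments vs {G}.

Lemma sv_vs (G : graph) (v : gV G) : cancel (vs v) (sv v).
Proof. by case=> [x|] //=; rewrite sv_sproj /=; case: eqP => // ->. Qed.

Lemma vs_sv (G : graph) (v : gV G) : cancel (sv v) (vs v).
Proof. by move=> s; apply: (sv_inj v); rewrite sv_vs. Qed.

Lemma o1_or0 (i : 'I_2) : i = ord0 \/ i = o1.
Proof. by case: i => [[|[|k]] hk] //; [left|right]; apply: val_inj. Qed.

Lemma out_move (V W : finType) (A : V -> V -> xnat) (v : V) (a : V -> xnat)
  (A' : W -> W -> xnat) (f : option V -> W) (g : W -> option V) :
  (forall y, valid (a y) (A v y)) -> (forall y, a y <> XInf) ->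
  (exists y, xlt 0 (a y)) -> (exists y, xlt 0 (xsub (A v y) (a y))) ->
  cancel f g -> cancel g f -> (forall s t, A' (f s) (f t) = Bout A v a s t) ->
  move_step (mgT V A) (mgT W A').
Proof.
move=> hval hfin [y0 hy0] [y1 hy1] fg gf hm.
pose c := fun t : gE (mgT V A) => (proj1_sig t).2.
have hR := repr_mgT V A.
apply: (@MoveO (mgT V A) (mgT W A') v 2 (pspl c a)).
- have h0 : xlt 0 (A v y0) by move: (hval y0) hy0; case: (a y0); case: (A v y0) => //= *; lia.
  by move=> hs; apply: (hs (exist _ (v, y0, 0) h0)).
- move=> i; case: (o1_or0 i) => ->.
  + have h0 : xlt 0 (A v y0) by move: (hval y0) hy0; case: (a y0); case: (A v y0) => //= *; lia.
    exists (exist _ (v, y0, 0) h0); split => //.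
    rewrite /pspl /c /=; move: (hfin y0) hy0; case: (a y0) => //= k _ ->; done.
  + have [j [h1 h2 h3]] := L5 (hval y1) hy1.
    exists (exist _ (v, y1, j) h1); split => //.
    by rewrite /pspl /c /= (negbTE h2).
- have hf : finite_edges (mgT V A) (fun e => gs e = v /\ pspl c a e = ord0).
    apply: (@mgT_fin V A v (fun y => fin (a y))) => e [h1 h2]; split => //.
    move: h2; rewrite /pspl /c; move: (hfin (gr e)); case: (a (gr e)) => //= k _.
    by case: ifP.
  move=> i j hij; case: (o1_or0 i) => hi; first by left; rewrite hi.
  case: (o1_or0 j) => hj; first by right; rewrite hj.
  by move: hij; rewrite hi hj eqxx.
- refine (@rep_iso (osplit_graph (mgT V A) v 2 (pspl c a)) (mgT W A') _ _ _ _ (fun s : gV (osplit_graph (mgT V A) v 2 (pspl c a)) => f (@sv (mgT V A) v s))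
     (fun w => @vs (mgT V A) v (g w)) (repr_osplit hR hval) (repr_mgT W A') _ _ _).
  + by move=> s; rewrite fg vs_sv.
  + by move=> w; rewrite sv_vs gf.
  + by move=> s t; rewrite hm.
Qed.

Lemma in_move (V W : finType) (A : V -> V -> xnat) (w : V) (b : V -> xnat)
  (A' : W -> W -> xnat) (f : option V -> W) (g : W -> option V) :
  (forall x, valid (b x) (A x w)) -> (forall y, A w y <> XInf) -> (exists y, xlt 0 (A w y)) ->
  (exists x, xlt 0 (b x)) -> (exists x, xlt 0 (xsub (A x w) (b x))) ->
  cancel f g -> cancel g f -> (forall s t, A' (f s) (f t) = Bout (fun x y => A y x) w b t s) ->
  move_step (mgT V A) (mgT W A').
Proof.
move=> hval hfin [y2 hy2] [x0 hx0] [x1 hx1] fg gf hm.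
pose G := mgT V A.
pose c := fun t : gE G => (proj1_sig t).2.
have hT : rep (tr G) (fun x y => A y x) c := repr_tr (repr_mgT V A).
pose p := @pspl (tr G) c b.
apply: (@MoveI G (mgT W A') w 2 p).
- move=> [hs|hinf].
  + by apply: (hs (exist _ (w, y2, 0) hy2)).
  + apply: hinf; apply: (@mgT_fin V A w (fun y => fin (A w y))) => e he; split => //.
    case: e he => [[[x y] j] h] /= hx; subst x; move: h (hfin y) => /=; case: (A w y) => //.
- have h0 : xlt 0 (A x0 w) by move: (hval x0) hx0; case: (b x0); case: (A x0 w) => //= *; lia.
  by move=> hs; apply: (hs (exist _ (x0, w, 0) h0)).
- move=> i; case: (o1_or0 i) => ->.
  + have [j [h1 h2 h3]] := L4 (hval x0) hx0.
    exists (exist _ (x0, w, j) h1); split => //.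
    by rewrite /p /pspl /c /= h2.
  + have [j [h1 h2 h3]] := L5 (hval x1) hx1.
    exists (exist _ (x1, w, j) h1); split => //.
    by rewrite /p /pspl /c /= (negbTE h2).
- refine (@rep_iso (tr (osplit_graph (tr G) w 2 p)) (mgT W A') _ _ _ _
     (fun s : gV (osplit_graph (tr G) w 2 p) => f (@sv (tr G) w s))
     (fun x => @vs (tr G) w (g x)) (repr_tr (repr_osplit hT hval)) (repr_mgT W A') _ _ _).
  + by move=> s; rewrite fg vs_sv.
  + by move=> x; rewrite sv_vs gf.
  + by move=> s t; rewrite hm.
Qed.


Definition shp (V : finType) (r : pred V) (N : V -> V -> nat) (x y : V) : xnat :=
  if r x then XFin (N x y) else XInf.
Arguments shp {V}.

Lemma coladd_move (V : finType) (r : pred V) (N : V -> V -> nat) (w v : V) :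
  r w -> ~~ r v -> 0 < N w w ->
  move_eq (mgT V (shp r N))
          (mgT V (shp r (fun x y => N x y + (y == w) * N x v))).
Proof.
move=> rw rv hww.
have wv : w != v by apply/eqP => h; move: rv; rewrite -h rw.
pose A := shp r N.
pose A1 := shp r (fun x y => N x y + (y == w) * N x v).
apply: (@me_trans _ (mgT (option V) (Bout A v (A w)))).

  apply: me_step; apply: (@out_move V (option V) A v (A w) _ id id) => //.
  - by move=> y; rewrite /A /shp (negbTE rv); case: ifP.
  - by move=> y; rewrite /A /shp rw.
  - by exists w; rewrite /A /shp rw.
  - by exists w; rewrite /A /shp (negbTE rv).
apply: me_sym; apply: me_step.
apply: (@in_move V (option V) A1 w (fun x => A x v) _ id id) => //.
- by move=> x; rewrite /A /A1 /shp eqxx mul1n; case: (r x) => //=; lia.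
- by move=> y; rewrite /A1 /shp rw.
- by exists w; rewrite /A1 /shp rw eqxx /=; lia.
- by exists v; rewrite /A /shp (negbTE rv).
- by exists v; rewrite /A /A1 /shp (negbTE rv).
- move=> s t; rewrite /Bout /A /A1 /shp.
  case: s => [x|]; case: t => [z|] /=.
  + case: (eqVneq x v) => [->|hxv]; first by rewrite (negbTE rv); case: eqP.
    case: (eqVneq z w) => [->|hzw]; rewrite ?eqxx /=.
      by case: (r x) => //=; rewrite mul1n addnK.
    by case: (r x) => //=; rewrite mul0n addn0.
  + by case: (eqVneq x v) => [->|hxv]; rewrite ?(negbTE rv).
  + case: (eqVneq z w) => [->|hzw]; rewrite ?eqxx /= rw.
      by rewrite /xsub mul1n addnK.
    by rewrite ?(negbTE hzw) /= ?mul0n ?addn0.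
  + by rewrite rw.
Qed.


Lemma eqSome (T : eqType) (a b : T) : (Some a == Some b) = (a == b).
Proof. by []. Qed.
Lemma eqSN (T : eqType) (a : T) : (Some a == None) = false.
Proof. by []. Qed.
Lemma eqNS (T : eqType) (a : T) : (None == Some a) = false.
Proof. by []. Qed.

Section Main.
Variables (n m : nat) (C : 'M[nat]_n).
Hypotheses (hm : 0 < m) (hmn : m < n) (hC : forall i j : 'I_n, i < m -> 0 < C i j).

Definition w : 'I_n := Ordinal (ltn_trans hm hmn).
Definition v : 'I_n := Ordinal hmn.
Definition r : pred 'I_n := fun x => x < m.
Definition N0 (x y : 'I_n) : nat := (x == y) + C x y.
Definition N1 (x y : 'I_n) : nat := N0 x y + (y == w) * N0 x v.
Definition N2 (x y : 'I_n) : nat := N1 x y + (y == w) * N1 x v.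
Definition A2 := shp r N2.
Definition b1 (x : 'I_n) : xnat := if r x then XFin 1 else XInf.
Definition B1 (s t : option 'I_n) : xnat := Bout (fun x y => A2 y x) w b1 t s.
Definition b2 (s : option 'I_n) : xnat := b1 (odflt w s).
Definition B2 (s t : option (option 'I_n)) : xnat := Bout (fun x y => B1 y x) (Some w) b2 t s.
Definition aM (t0 : option 'I_n) : xnat := B2 None (Some t0).
Definition AM (s t0 : option 'I_n) : xnat :=
  match s with None => xadd (aM t0) (aM t0) | Some s0 => B2 (Some (Some s0)) (Some t0) end.
Definition amr (x : 'I_n) (t0 : option 'I_n) : nat :=
  match t0 with None => 1 | Some z => if z == w then N2 x w - 2 else N2 x z end.

Lemma rw : r w. Proof. by []. Qed.
Lemma rv : ~~ r v. Proof. by rewrite /r /= ltnn. Qed.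
Lemma wv : w != v. Proof. by apply/eqP => /(congr1 val) /= h; move: hm; rewrite -h. Qed.

Lemma N2E (x y : 'I_n) : r x ->
  N2 x y = (x == y) + C x y + (y == w) * (C x v + C x v).
Proof.
move=> rx; have xv : (x == v) = false by apply/negbTE/eqP => h; move: rv; rewrite -h rx.
have vw : (v == w) = false by rewrite eq_sym (negbTE wv).
rewrite /N2 /N1 /N0 xv vw.
by case: (y == w); rewrite /=; lia.
Qed.

Lemma AME x t0 : AM (Some x) t0 = if r x then XFin (amr x t0) else XInf.
Proof.
rewrite /AM /B2 /B1 /Bout /b2 /b1 /A2 /shp /amr /=.
case: t0 => [z|] /=.
- case: (eqVneq z w) => [->|hz]; rewrite ?eqxx ?eqSome ?eqxx /=.
  + by case: (r x) => //=; rewrite -subnDA.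
  + by rewrite ?eqSome (negbTE hz).
- by [].
Qed.

Lemma aME t0 : aM t0 = XFin (amr w t0).
Proof. by have -> : aM t0 = AM (Some w) t0 by []; rewrite AME rw. Qed.

Lemma AMNE t0 : AM None t0 = XFin (amr w t0 + amr w t0).
Proof. by rewrite /AM aME. Qed.

Lemma B2col s : B2 s None = B2 s (Some None).
Proof. by rewrite /B2 /Bout /=. Qed.

Lemma B2SN t : B2 (Some None) t = B2 None t.
Proof. by []. Qed.

Lemma step0 : move_eq (mgT 'I_n (Jplus n m (fun i j => C i j))) (mgT 'I_n A2).
Proof.
have -> : Jplus n m (fun i j => C i j) = shp r N0.
  by do 2 (apply: functional_extensionality => ?); rewrite /Jplus /Jmx /shp /r; case: ifP.
apply: me_trans (@coladd_move _ r N0 w v rw rv _) _; first by rewrite /N0 eqxx.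
exact: (@coladd_move _ r N1 w v rw rv _); rewrite /N1 /N0 eqxx.
Qed.

Lemma step1 : move_step (mgT 'I_n A2) (mgT (option 'I_n) B1).
Proof.
apply: (@in_move _ _ A2 w b1 B1 id id) => //.
- move=> x; rewrite /b1 /A2 /shp; case: ifP => rx //=.
  by rewrite N2E //; have := hC x w rx; lia.
- by move=> y; rewrite /A2 /shp rw.
- by exists w; rewrite /A2 /shp rw /= N2E // eqxx; lia.
- by exists w; rewrite /b1 rw.
- by exists v; rewrite /A2 /shp (negbTE rv).
Qed.

Lemma step2 : move_step (mgT (option 'I_n) B1) (mgT (option (option 'I_n)) B2).
Proof.
apply: (@in_move _ _ B1 (Some w) b2 B2 id id) => //.
- move=> x; rewrite /b2 /B1 /Bout /= ?eqxx /A2 /shp /b1; case: ifP => rx //=.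
  rewrite N2E // eqxx mul1n; have := hC (odflt w x) w rx; have := hC (odflt w x) v rx; case: (_ == _) => /=; lia.
- case=> [z|]; rewrite /B1 /Bout /= /A2 /shp /b1 rw //; by case: ifP.
- by exists None; rewrite /B1 /Bout /= /b1 rw.
- by exists None; rewrite /b2 /b1 rw.
- by exists (Some v); rewrite /B1 /b2 /Bout /= ?eqxx /A2 /shp /b1 (negbTE rv).
Qed.

Lemma step3 : move_step (mgT (option 'I_n) AM) (mgT (option (option 'I_n)) B2).
Proof.
apply: (@out_move _ _ AM None aM B2 id id) => //.
- by move=> y; rewrite AMNE aME /=; lia.
- by move=> y; rewrite aME.
- by exists None; rewrite aME.
- by exists None; rewrite AMNE aME.
- move=> s t; rewrite /Bout; case: s => [[x|]|] /=.
  + by case: t => [t0|] //=; rewrite B2col.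
  + rewrite B2SN aME /= addnK -aME.
    by case: t => [t0|] //=; rewrite B2col.
  + by case: t => [t0|] //=; rewrite B2col.
Qed.

Definition ayn (t0 : option 'I_n) : nat :=
  if t0 == Some w then amr w t0 - 1 else if t0 == Some v then amr w t0 + 1 else amr w t0.
Definition ay (t0 : option 'I_n) : xnat := XFin (ayn t0).
Definition Bf := Bout AM (Some v) ay.
Definition isreg (s : option (option 'I_n)) : bool :=
  match s with None => true | Some None => true | Some (Some x) => x < m end.

Lemma eqw (x : 'I_n) : (x == w) = (nat_of_ord x == 0).
Proof. by []. Qed.
Lemma eqv (x : 'I_n) : (x == v) = (nat_of_ord x == m).
Proof. by []. Qed.

Lemma amr_ge x t0 : r x -> 1 + (Some x == t0) <= amr x t0.
Proof.
move=> rx; case: t0 => [z|] //=.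
have h1 := hC x z rx; have h2 := hC x w rx; have h3 := hC x v rx.
case: (eqVneq z w) => [->|hz].
- rewrite N2E // eqxx eqSome; case: (x == w) => /=; lia.
- rewrite N2E // (negbTE hz) eqSome /=; case: (x == z) => /=; lia.
Qed.

Lemma amr_wv : amr w (Some v) = C w v.
Proof.
have vw : (v == w) = false by rewrite eq_sym (negbTE wv).
by rewrite /amr vw N2E // vw (negbTE wv) mul0n addn0.
Qed.

Lemma ayn_ge t0 : 1 <= ayn t0.
Proof.
rewrite /ayn; case: eqP => [->|_].
  by have := amr_ge w (Some w) rw; rewrite eqxx /=; lia.
case: ifP => _; have := amr_ge w t0 rw; case: (Some w == t0) => /=; lia.
Qed.

Lemma ayn_v : ayn (Some v) = amr w (Some v) + 1.
Proof. by rewrite /ayn eqSome eq_sym (negbTE wv) eqxx. Qed.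

Lemma BfX x t : Bf (Some (Some x)) t =
  if r x then XFin (amr x (odflt (Some v) t)) else XInf.
Proof.
rewrite /Bf /Bout eqSome; case: (eqVneq x v) => [->|hx].
  by rewrite AME (negbTE rv).
by rewrite AME.
Qed.

Lemma BfM t : Bf (Some None) t = XFin (amr w (odflt (Some v) t) + amr w (odflt (Some v) t)).
Proof. by rewrite /Bf /Bout /= aME. Qed.

Lemma BfN t : Bf None t = XFin (ayn (odflt (Some v) t)).
Proof. by []. Qed.

Lemma M1 s t : ~~ isreg s -> Bf s t = XInf.
Proof. by case: s => [[x|]|] // hx; rewrite BfX /r; move: hx => /= /negbTE ->. Qed.

Lemma M2 s t : isreg s -> exists k, Bf s t = XFin k /\ 1 + (s == t) <= k.
Proof.
case: s => [[x|]|] hs.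
- have hs' : r x := hs; rewrite BfX hs'; eexists; split; first reflexivity.
  case: t => [t0|] /=; first by rewrite eqSome; apply: amr_ge.
  by apply: leq_trans (amr_ge x (Some v) hs'); rewrite leq_add2l.
- rewrite BfM; eexists; split; first reflexivity.
  by have := amr_ge w (odflt (Some v) t) rw; case: (_ == _) => /=; lia.
- rewrite BfN; eexists; split; first reflexivity.
  case: t => [t0|] /=; first by rewrite ?eqNS; apply: ayn_ge.
  by rewrite ayn_v; have := amr_ge w (Some v) rw; lia.
Qed.

Lemma M3 s : isreg s -> Bf s (Some None) = XFin (1 + (s == Some None)).
Proof.
case: s => [[x|]|] hs.
- by have hs' : r x := hs; rewrite BfX hs'.
- by rewrite BfM.
- by rewrite BfN.
Qed.

Lemma M4 t : isreg t ->
  fin (Bf (Some (Some w)) t) - (Some (Some w) == t) = fin (Bf None t) - (None == t).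
Proof.
have vw : (v == w) = false by rewrite eq_sym (negbTE wv).
rewrite BfX BfN rw; case: t => [[x|]|] ht /=.
- case: (eqVneq x w) => [->|hxw].
    by rewrite /ayn /amr !eqxx /=; lia.
  have hwx : (w == x) = false by rewrite eq_sym (negbTE hxw).
  have hxv : (x == v) = false by apply/negbTE/eqP => h; move: ht; rewrite h /= ltnn.
  by rewrite !eqSome /ayn !eqSome /amr hwx (negbTE hxw) hxv /= !subn0.
- by rewrite /ayn.
- by rewrite ayn_v /amr vw /=; lia.
Qed.

Definition phin (s : option (option 'I_n)) : nat :=
  match s with None => m.+1 | Some None => 0
  | Some (Some x) => if x == w then m else if x < m then nat_of_ord x else x.+2 end.
Definition phi (s : option (option 'I_n)) : 'I_n.+2 := inord (phin s).
Definition psi (i : 'I_n.+2) : option (option 'I_n) :=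
  if nat_of_ord i == 0 then Some None
  else if i < m then Some (Some (insubd w i))
  else if nat_of_ord i == m then Some (Some w)
  else if nat_of_ord i == m.+1 then None
  else Some (Some (insubd w (i - 2))).

Lemma phin_lt s : phin s < n.+2.
Proof.
case: s => [[x|]|] //=; last by lia.
case: ifP => _; first by lia.
case: ifP => _; have := ltn_ord x; lia.
Qed.

Lemma val_phi s : nat_of_ord (phi s) = phin s.
Proof. by rewrite /phi inordK // phin_lt. Qed.

Lemma phiK : cancel phi psi.
Proof.
move=> s; rewrite /psi val_phi; case: s => [[x|]|] /=.
- rewrite eqw; case: (eqVneq (nat_of_ord x) 0) => hx0.
  + have -> : (m == 0) = false by lia.
    rewrite ltnn eqxx; congr (Some (Some _)); apply: val_inj; exact: (esym hx0).
  + case: (ltnP x m) => hxm.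
    * by rewrite (negbTE hx0) hxm valKd.
    * have -> : (x.+2 == 0) = false by [].
      have -> : (x.+2 < m) = false by lia.
      have -> : (x.+2 == m) = false by lia.
      have -> : (x.+2 == m.+1) = false by lia.
      by rewrite subn2 /= valKd.
- by [].
- have -> : (m.+1 < m) = false by lia.
  have -> : (m.+1 == m) = false by lia.
  by rewrite eqxx.
Qed.

Lemma psiK : cancel psi phi.
Proof.
move=> i; apply: val_inj => /=; rewrite val_phi /psi.
have hi := ltn_ord i.
case: (eqVneq (nat_of_ord i) 0) => [->|h0] //=.
case: ifP => him.
  rewrite /= eqw val_insubd; have -> : i < n by lia.
  by rewrite (negbTE h0) him.
case: (eqVneq (nat_of_ord i) m) => [->|hm'].
  by rewrite /phin eqxx.
case: (eqVneq (nat_of_ord i) m.+1) => [->|hm1] //=.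
rewrite eqw val_insubd; have -> : i - 2 < n by lia.
have -> : (i - 2 == 0) = false by lia.
have -> : (i - 2 < m) = false by lia.
lia.
Qed.

Lemma phi_reg s : (phi s < m.+2) = isreg s.
Proof.
rewrite val_phi; case: s => [[x|]|] //=; last by lia.
rewrite eqw; case: (eqVneq (nat_of_ord x) 0) => [hx|hx].
  by rewrite hx hm; lia.
by case: ifP => h; lia.
Qed.

Definition Dm : 'M[int]_n.+2 :=
  \matrix_(i, l) (if i < m.+2 then Posz (fin (Bf (psi i) (psi l)) - (i == l)) else 0%R).

Lemma step4 : move_step (mgT (option 'I_n) AM)
  (mgT 'I_n.+2 (Jplus n.+2 m.+2 (fun i l => absz (Dm i l)))).
Proof.
apply: (@out_move _ _ AM (Some v) ay _ phi psi) => //.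
- by move=> y; rewrite AME (negbTE rv).
- by exists None; rewrite /ay /ayn.
- by exists None; rewrite AME (negbTE rv).
- exact: phiK.
- exact: psiK.
- move=> s t; rewrite /Jplus /Jmx mxE !phiK phi_reg (inj_eq (can_inj phiK)).
  change (Bout AM (Some v) ay s t) with (Bf s t).
  case: (boolP (isreg s)) => hs; last by rewrite M1.
  have [k [hk hk2]] := M2 s t hs; rewrite hk /=.
  by congr XFin; lia.
Qed.

Lemma chain : move_eq (mgraph n (Jplus n m (fun i j => C i j)))
  (mgraph n.+2 (Jplus n.+2 m.+2 (fun i l => absz (Dm i l)))).
Proof.
change (move_eq (mgT 'I_n (Jplus n m (fun i j => C i j)))
  (mgT 'I_n.+2 (Jplus n.+2 m.+2 (fun i l => absz (Dm i l))))).
apply: (me_trans _ _ _ step0).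
apply: (me_trans _ _ _ (me_step _ _ step1)).
apply: (me_trans _ _ _ (me_step _ _ step2)).
apply: (me_trans _ _ _ (me_sym _ _ (me_step _ _ step3))).
exact: (me_step _ _ step4).
Qed.

Lemma psi_reg i : isreg (psi i) = (i < m.+2).
Proof. by rewrite -phi_reg psiK. Qed.

Lemma psi_eq i l : (psi i == psi l) = (i == l).
Proof. exact: (inj_eq (can_inj psiK)). Qed.

Lemma psi0 : psi ord0 = Some None.
Proof. by []. Qed.

Lemma main_exists :
  exists D : 'M[int]_(n.+2),
    [/\ (forall (i l : 'I_(n.+2)), (m.+2 <= i)%N -> D i l = 0%R),
        (forall (i l : 'I_(n.+2)), (i < m.+2)%N -> (0 < D i l)%R),
        (forall (i : 'I_(n.+2)), (i < m.+2)%N -> D i ord0 = 1%R),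
        (\det (\matrix_(i < m.+2, l < m.+2) D (inord i) (inord l)) = 0)%R
      & move_eq_mx n n.+2 (Jplus n m (fun i j => C i j))
                   (Jplus n.+2 m.+2 (fun i l => absz (D i l)))].
Proof.
exists Dm; split.
- by move=> i l hi; rewrite mxE ltnNge hi.
- move=> i l hi; rewrite mxE hi ltz_nat.
  have [k [hk hk2]] := M2 (psi i) (psi l) (ltac:(by rewrite psi_reg)).
  by rewrite hk /= -psi_eq; lia.
- by move=> i hi; rewrite mxE hi -psi_eq psi0 M3 ?psi_reg //= addnK.
- have hI : (inord m : 'I_(m.+2)) != inord m.+1.
    by apply/eqP => /(congr1 val); rewrite /= !inordK //; lia.
  apply: (determinant_alternate hI) => l; rewrite !mxE.
  have e1 : nat_of_ord (inord m : 'I_(m.+2)) = m by rewrite inordK.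
  have e2 : nat_of_ord (inord m.+1 : 'I_(m.+2)) = m.+1 by rewrite inordK.
  rewrite e1 e2.
  have p1 : psi (inord m) = Some (Some w).
    rewrite /psi inordK; last by lia.
    have -> : (m == 0) = false by lia.
    by rewrite ltnn eqxx.
  have p2 : psi (inord m.+1) = None.
    rewrite /psi inordK; last by lia.
    have -> : (m.+1 == 0) = false by [].
    have -> : (m.+1 < m) = false by lia.
    have -> : (m.+1 == m) = false by lia.
    by rewrite eqxx.
  have hl : (inord l : 'I_n.+2) < m.+2 by rewrite inordK; have := ltn_ord l; lia.
  have hm1 : (inord m : 'I_n.+2) < m.+2 by rewrite inordK; lia.
  have hm2 : (inord m.+1 : 'I_n.+2) < m.+2 by rewrite inordK; lia.
  rewrite hm1 hm2 -!psi_eq p1 p2; congr Posz.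
  by apply: M4; rewrite psi_reg.
- exact: chain.
Qed.
End Main.

Import GRing.Theory Num.Theory.

Theorem proposition8p3 (n m : nat) (C : 'M[nat]_n) :
  (m <= n)%N -> m != n ->
  (forall (i j : 'I_n), (i < m)%N -> (0 < C i j)%N) ->
  (forall (i j : 'I_n), (m <= i)%N -> C i j = 0%N) ->
  (exists (i j : 'I_n), C i j = 1%N) ->
  exists D : 'M[int]_(n.+2),
    [/\ (forall (i l : 'I_(n.+2)), (m.+2 <= i)%N -> D i l = 0%R),
        (forall (i l : 'I_(n.+2)), (i < m.+2)%N -> (0 < D i l)%R),
        (forall (i : 'I_(n.+2)), (i < m.+2)%N -> D i ord0 = 1%R),
        (\det (\matrix_(i < m.+2, l < m.+2) D (inord i) (inord l)) = 0)%R
      & move_eq_mx n n.+2 (Jplus n m (fun i j => C i j))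
                   (Jplus n.+2 m.+2 (fun i l => absz (D i l)))].
Proof.
move=> hmn1 hneq hpos hzero [i [j hij]].
have hm : 0 < m.
  case: (posnP m) => // hm0; move: (hzero i j); rewrite hm0 hij => /(_ isT).
  by [].
have hmn : m < n by rewrite ltn_neqAle hneq hmn1.
exact: (@main_exists n m C hm hmn hpos).
Qed.
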